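(* Let $(E,\mathcal{I})$ be the partition matroid given by a partition $E_1,\dots,E_b$ of $E$ and integers $k_z$ with $2\le k_z\le|E_z|$, and let $\gamma=\min_{z\in[b]}\lfloor k_z/2\rfloor/k_z$. Suppose $f:2^E\times O^E\to\mathbb{R}_{\ge0}$ is worst-case monotone and worst-case submodular with respect to $p(\phi)$ and satisfies minimal dependency. Then the adaptive hybrid policy $\pi^m=\pi^{mw}@\pi^{ma}$ satisfies $f_{wc}(\pi^*_{wc})\le(1+\frac1\gamma)f_{wc}(\pi^m)$, where $\pi^*_{wc}$ maximizes $f_{wc}(\pi)$ over policies $\pi$ with $E(\pi,\phi)\in\mathcal{I}$ for all $\phi\in U^+$.
   Context: Setting. $E$ is a finite set of $n$ items and $O$ a finite set of states. A realization is a function $\phi:E\to O$; $p$ is a probability distribution (prior) on the set of all realizations, $\Phi$ denotes a random realization with law $p$, and $U^+=\{\phi: p(\phi)>0\}$. A partial realization is a function $\psi:S\to O$ with $S\subseteq E$, $\mathrm{dom}(\psi)=S$; it is identified with the set of pairs $\{(e,\psi(e)):e\in S\}$, so $\psi\subseteq\psi'$ means $\mathrm{dom}(\psi)\subseteq\mathrm{dom}(\psi')$ and they agree on $\mathrm{dom}(\psi)$. A realization $\phi$ is consistent with $\psi$, written $\phi\sim\psi$, if it agrees with $\psi$ on $\mathrm{dom}(\psi)$. Only partial realizations with $\Pr[\Phi\sim\psi]>0$ are considered, and $p(\phi\mid\psi)=\Pr[\Phi=\phi\mid\Phi\sim\psi]$. For $S\subseteq E$ and a partial realization $\psi$, $f(S,\psi)=\mathbb{E}[f(S,\Phi)\mid\Phi\sim\psi]$.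 For $e\notin\mathrm{dom}(\psi)$, let $O(e,\psi)=\{o\in O:\exists\phi\text{ with }p(\phi\mid\psi)>0,\ \phi(e)=o\}$ and define the worst-case marginal utility $f_{wc}(e\mid\psi)=\min_{o\in O(e,\psi)}\{f(\mathrm{dom}(\psi)\cup\{e\},\psi\cup\{(e,o)\})-f(\mathrm{dom}(\psi),\psi)\}$ and the expected marginal utility $f_{avg}(e\mid\psi)=\mathbb{E}[f(\mathrm{dom}(\psi)\cup\{e\},\Phi)-f(\mathrm{dom}(\psi),\Phi)\mid\Phi\sim\psi]$. $f$ is worst-case submodular if $f_{wc}(e\mid\psi)\ge f_{wc}(e\mid\psi')$ for all partial realizations $\psi\subseteq\psi'$ and all $e\in E\setminus\mathrm{dom}(\psi')$; it is worst-case monotone if $f_{wc}(e\mid\psi)\ge0$ for all $\psi$ and $e\notin\mathrm{dom}(\psi)$. $f$ satisfies minimal dependency if $f(\mathrm{dom}(\psi),\psi)=f(\mathrm{dom}(\psi),\phi)$ for every partial realization $\psi$ and every $\phi\in U^+$ with $\phi\sim\psi$. Policies. A (deterministic) policy $\pi$ is a rule which, given the current observation (the partial realization of the items selected so far), either selects a new item or stops; after an item $e$ is selected under realization $\phi$, the state $\phi(e)$ is observed. $E(\pi,\phi)$ is the set of items selected by $\pi$ under $\phi$, and $f_{wc}(\pi)=\min_{\phi\in U^+}f(E(\pi,\phi),\phi)$. The concatenation $\pi@\pi'$ runs $\pi$ and then runs $\pi'$ from scratch, ignoring the observations obtained by $\pi$; its selected set is the union of the two. Partition matroid: $\mathcal{I}=\{I\subseteq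 E:|I\cap E_z|\le k_z\ \forall z\in[b]\}$. Policy $\pi^{mw}$: starting from the empty observation $\psi=\emptyset$, for $z=1,\dots,b$ in turn, perform $\lfloor k_z/2\rfloor$ iterations, each selecting $e\in\arg\max_{e\in E_z\setminus\mathrm{dom}(\psi)}f_{wc}(e\mid\psi)$ for the current observation $\psi$, observing $\Phi(e)$ and adding $(e,\Phi(e))$ to $\psi$. Policy $\pi^{ma}$: identical except that each meta-round $z$ performs $\lceil k_z/2\rceil$ iterations and uses $f_{avg}(e\mid\psi)$ in place of $f_{wc}(e\mid\psi)$. Ties are broken arbitrarily. $\pi^m=\pi^{mw}@\pi^{ma}$. *)

(* Defs.v *)
From HB Require Import structures.
From mathcomp Require Import all_boot all_order all_algebra.
From mathcomp Require Export reals.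
Set Implicit Arguments. Unset Strict Implicit. Unset Printing Implicit Defensive.
Import Order.TTheory GRing.Theory Num.Theory.
Local Open Scope ring_scope.

Section AdaptiveSub.
Context {R : realType} {E O : finType}.

Definition realization := {ffun E -> O}.
(* partial realizations: psi e = Some o iff e \in dom psi and psi(e) = o *)
Definition partial := {ffun E -> option O}.

Definition empty_obs : partial := [ffun _ => None].
Definition dom (psi : partial) : {set E} := [set e | psi e != None].

Definition consistent (phi : realization) (psi : partial) : bool :=
  [forall e, if psi e is Some o then phi e == o else true].

Definition subrel (psi psi' : partial) : bool :=
  [forall e, if psi e is Some o then psi' e == Some o else true].

Definition extend (psi : partial) (e : E) (o : O) : partial :=
  [ffun x => if x == e then Some o else psi x].

Variable p : {ffun realization -> R}.
Variable f : {set E} -> realization -> R.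

Definition prob (psi : partial) : R := \sum_(phi | consistent phi psi) p phi.

Definition condexp (psi : partial) (g : realization -> R) : R :=
  (\sum_(phi | consistent phi psi) p phi * g phi) / prob psi.

Definition fpart (S : {set E}) (psi : partial) : R := condexp psi (f S).

Definition Ostates (e : E) (psi : partial) : {set O} :=
  [set o | [exists phi, [&& consistent phi psi, 0 < p phi & phi e == o]]].

(* minimum of g over a finite set A (value 0 if A is empty, never used) *)
Definition setmin {T : finType} (A : {pred T}) (g : T -> R) : R :=
  if [pick x in A] is Some x0 then \big[Num.min/g x0]_(x in A) g x else 0.

Definition fwc (e : E) (psi : partial) : R :=
  setmin (mem (Ostates e psi))
    (fun o => fpart (e |: dom psi) (extend psi e o) - fpart (dom psi) psi).

Definition favg (e : E) (psi : partial) : R :=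
  condexp psi (fun phi => f (e |: dom psi) phi - f (dom psi) phi).

Definition is_prior : Prop :=
  (forall phi, 0 <= p phi) /\ \sum_phi p phi = 1.

Definition worst_case_submodular : Prop :=
  forall (psi psi' : partial) (e : E),
    0 < prob psi -> 0 < prob psi' -> subrel psi psi' -> e \notin dom psi' ->
    fwc e psi' <= fwc e psi.

Definition worst_case_monotone : Prop :=
  forall (psi : partial) (e : E), 0 < prob psi -> e \notin dom psi ->
    0 <= fwc e psi.

Definition minimal_dependency : Prop :=
  forall (psi : partial) (phi : realization),
    0 < prob psi -> 0 < p phi -> consistent phi psi ->
    fpart (dom psi) psi = f (dom psi) phi.

(* Deterministic policies: given the current observation, select an item
   (Some e) or stop (None).  Selecting an already selected item is
   treated as stopping. *)
Definition policy := partial -> option E.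

Definition step (pi : policy) (phi : realization) (psi : partial) : partial :=
  if pi psi is Some e then
    (if e \in dom psi then psi else extend psi e (phi e))
  else psi.

(* at most #|E| new items can be selected, so #|E| steps reach the end *)
Definition run (pi : policy) (phi : realization) : partial :=
  iter #|E| (step pi phi) empty_obs.

Definition Esel (pi : policy) (phi : realization) : {set E} := dom (run pi phi).

Definition minU (g : realization -> R) : R := setmin (fun phi => 0 < p phi) g.

Definition fwc_pol (pi : policy) : R := minU (fun phi => f (Esel pi phi) phi).

End AdaptiveSub.

Section Partition.
Context {E : finType} {b : nat}.
Variable part : E -> 'I_b.   (* e \in E_z  iff  part e = z *)
Variable k : 'I_b -> nat.

Definition block (z : 'I_b) : {set E} := [set e | part e == z].

Definition indep (I : {set E}) : bool := [forall z, #|I :&: block z| <= k z]%N.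

Definition greedy_run {O : finType} (cnt : 'I_b -> nat)
    (sel : {ffun E -> option O} -> 'I_b -> E) (phi : {ffun E -> O})
    : {ffun E -> option O} :=
  foldl (fun psi z =>
           iter (cnt z) (fun psi => extend psi (sel psi z) (phi (sel psi z))) psi)
        empty_obs (enum 'I_b).

(* sel is an arbitrary tie-breaking rule for argmax_{e in E_z \ dom psi} score e psi *)
Definition greedy_selector {O : finType} {R : realType}
    (pos : {ffun E -> option O} -> Prop)
    (score : E -> {ffun E -> option O} -> R)
    (sel : {ffun E -> option O} -> 'I_b -> E) : Prop :=
  forall psi z, pos psi ->
    [exists e, (e \in block z) && (e \notin dom psi)] ->
    [/\ sel psi z \in block z, sel psi z \notin dom psi &
        forall e, e \in block z -> e \notin dom psi -> score e psi <= score (sel psi z) psi].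

End Partition.

(* gamma = min_z floor(k_z/2)/k_z  (b >= 1; every term is <= 1/2 < 1) *)
Definition gamma {R : realType} {b : nat} (k : 'I_b -> nat) : R :=
  \big[Num.min/1]_(z < b) (((k z)./2)%:R / (k z)%:R).

(* Main.v *)
From HB Require Import structures.
From mathcomp Require Import all_boot all_order all_algebra.
From mathcomp Require Import reals.
From mathcomp Require Import lra.
Require Import Defs.
Import Order.TTheory GRing.Theory Num.Theory.
Local Open Scope ring_scope.
Set Implicit Arguments. Unset Strict Implicit.

Section Basic.
Variables (R : realType) (E O : finType).
Implicit Types (psi : {ffun E -> option O}) (phi : {ffun E -> O}).

Lemma setmin_le (T : finType) (A : {pred T}) (g : T -> R) x :
  x \in A -> setmin A g <= g x.
Proof.
move=> xA; rewrite /setmin; case: pickP => [x0 Hx0|/(_ x)]; last by rewrite xA.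
exact: bigmin_le_cond.
Qed.

Lemma setmin_ex (T : finType) (A : {pred T}) (g : T -> R) :
  (exists x, x \in A) -> exists2 x, x \in A & setmin A g = g x.
Proof.
move=> [x xA]; rewrite /setmin; case: pickP => [x0 Hx0|/(_ x)]; last by rewrite xA.
apply: (big_ind (fun v => exists2 y, y \in A & v = g y)).
- by exists x0.
- move=> a c [ya Ha ->] [yc Hc ->]; case: (leP (g ya) (g yc)) => _.
  + by exists ya.
  + by exists yc.
- by move=> i Hi; exists i.
Qed.

Lemma dom_extend psi e o : dom (extend psi e o) = e |: dom psi.
Proof.
apply/setP=> x; rewrite !inE ffunE. by case: (x == e).
Qed.

Lemma in_dom psi e : (e \in dom psi) = (psi e != None).
Proof. by rewrite inE. Qed.

Lemma consistentP phi psi :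
  reflect (forall e o, psi e = Some o -> phi e = o) (consistent phi psi).
Proof.
apply: (iffP forallP) => H e.
- by move=> o Ho; have := H e; rewrite Ho => /eqP.
- by case Ho: (psi e) => [o|//]; rewrite (H e o Ho).
Qed.

Lemma subrelP psi psi' :
  reflect (forall e o, psi e = Some o -> psi' e = Some o) (subrel psi psi').
Proof.
apply: (iffP forallP) => H e.
- by move=> o Ho; have := H e; rewrite Ho => /eqP.
- by case Ho: (psi e) => [o|//]; rewrite (H e o Ho).
Qed.

Lemma subrel_refl psi : subrel psi psi.
Proof. by apply/subrelP. Qed.

Lemma subrel_trans psi1 psi2 psi3 :
  subrel psi1 psi2 -> subrel psi2 psi3 -> subrel psi1 psi3.
Proof. by move=> /subrelP H1 /subrelP H2; apply/subrelP => e o /H1 /H2. Qed.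

Lemma subrel_dom psi psi' : subrel psi psi' -> dom psi \subset dom psi'.
Proof.
move=> /subrelP H; apply/subsetP => e; rewrite !inE.
by case He: (psi e) => [o|//]; rewrite (H e o He).
Qed.

Lemma consistent_extend phi psi e :
  consistent phi psi -> consistent phi (extend psi e (phi e)).
Proof.
move=> /consistentP H; apply/consistentP => x o; rewrite ffunE.
by case: eqP => [-> [<-]|_ /H].
Qed.

Lemma consistent_extend_inv phi psi e o :
  psi e = None -> consistent phi (extend psi e o) -> consistent phi psi /\ phi e = o.
Proof.
move=> He /consistentP H; split; last by apply: H; rewrite ffunE eqxx.
apply/consistentP => x o' Hx; apply: H; rewrite ffunE; case: eqP => // Exe.
by move: Hx; rewrite Exe He.
Qed.

Lemma consistent_extend2 phi psi e o :
  consistent phi psi -> phi e = o -> consistent phi (extend psi e o).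
Proof. by move=> H <-; exact: consistent_extend. Qed.

Lemma subrel_extend_cons phi psi e :
  consistent phi psi -> subrel psi (extend psi e (phi e)).
Proof.
move=> /consistentP H; apply/subrelP => x o Hx; rewrite ffunE.
by case: eqP => // Exe; rewrite -Exe; congr Some; apply: H.
Qed.

Lemma subrel_extend2 psi psi' e o :
  subrel psi psi' -> subrel (extend psi e o) (extend psi' e o).
Proof.
move=> /subrelP H; apply/subrelP => x o'; rewrite !ffunE.
by case: eqP => // _ /H.
Qed.

Lemma subrel_extend_none psi psi' e o :
  subrel psi psi' -> psi' e = None -> subrel psi (extend psi' e o).
Proof.
move=> /subrelP H He; apply/subrelP => x o' Hx; rewrite ffunE.
case: eqP => [Exe|_]; last exact: H.
by move: (H _ _ Hx); rewrite Exe He.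
Qed.

Lemma extend_same psi e o : psi e = Some o -> extend psi e o = psi.
Proof. by move=> He; apply/ffunP => x; rewrite ffunE; case: eqP => // ->. Qed.

Definition restr phi (S : {set E}) : {ffun E -> option O} :=
  [ffun x => if x \in S then Some (phi x) else None].

Lemma dom_restr phi S : dom (restr phi S) = S.
Proof. by apply/setP => x; rewrite !inE ffunE; case: (x \in S). Qed.

Lemma consistent_restr phi S : consistent phi (restr phi S).
Proof. by apply/consistentP => x o; rewrite ffunE; case: (x \in S) => // [[]]. Qed.

End Basic.

Section Main.
Variables (R : realType) (E O : finType).
Variables (p : {ffun {ffun E -> O} -> R}) (f : {set E} -> {ffun E -> O} -> R).
Hypothesis Hprior : is_prior p.
Hypothesis Hmon : worst_case_monotone p f.
Hypothesis Hsub : worst_case_submodular p f.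
Hypothesis Hmd : minimal_dependency p f.
Implicit Types (psi : {ffun E -> option O}) (phi : {ffun E -> O}).

Lemma prob_gt0 phi psi : 0 < p phi -> consistent phi psi -> 0 < prob p psi.
Proof.
move=> Hp Hc; rewrite /prob (bigD1 phi) //=.
apply: (lt_le_trans Hp); rewrite lerDl; apply: sumr_ge0 => i _.
by case: Hprior => H _; exact: H.
Qed.

Lemma prob_ex psi : 0 < prob p psi -> exists phi, consistent phi psi /\ 0 < p phi.
Proof.
move=> Hp; case: (boolP [exists phi, consistent phi psi && (0 < p phi)]).
  by move=> /existsP [phi /andP [H1 H2]]; exists phi.
move=> /existsPn H; exfalso; move: Hp; apply/negP; rewrite -leNgt.
apply: sumr_le0 => phi Hc; move: (H phi); rewrite Hc /= leNgt => ->. done.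
Qed.

Lemma Ostates_in phi psi e :
  0 < p phi -> consistent phi psi -> phi e \in Ostates p e psi.
Proof. by move=> Hp Hc; rewrite inE; apply/existsP; exists phi; rewrite Hc Hp eqxx. Qed.

Lemma gain phi psi e : 0 < p phi -> consistent phi psi -> e \notin dom psi ->
  fwc p f e psi <= f (e |: dom psi) phi - f (dom psi) phi.
Proof.
move=> Hp Hc He; rewrite /fwc.
apply: le_trans (setmin_le _ (Ostates_in e Hp Hc)) _.
have Hc' := consistent_extend e Hc.
have := Hmd (prob_gt0 Hp Hc') Hp Hc'; rewrite dom_extend => ->.
by rewrite (Hmd (prob_gt0 Hp Hc) Hp Hc).
Qed.

Lemma adv psi e : 0 < prob p psi -> e \notin dom psi ->
  exists o, 0 < prob p (extend psi e o) /\
    forall phi, 0 < p phi -> consistent phi (extend psi e o) ->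
      f (e |: dom psi) phi - f (dom psi) phi = fwc p f e psi.
Proof.
move=> Hp He.
have [phi0 [Hc0 Hp0]] := prob_ex Hp.
have [o Ho Hmin] := setmin_ex (fun o => fpart p f (e |: dom psi) (extend psi e o)
    - fpart p f (dom psi) psi) (ex_intro (fun x => x \in mem (Ostates p e psi)) _ (Ostates_in e Hp0 Hc0)).
move: Ho; rewrite inE => /existsP [phi1 /and3P [Hc1 Hp1 /eqP He1]].
have Hpe : psi e = None by move: He; rewrite in_dom negbK => /eqP.
have Hc1' : consistent phi1 (extend psi e o) by apply: consistent_extend2.
exists o; split; first exact: prob_gt0 Hp1 Hc1'.
move=> phi Hphi Hc; rewrite /fwc Hmin.
have [Hcp _] := consistent_extend_inv Hpe Hc.
have := Hmd (prob_gt0 Hphi Hc) Hphi Hc; rewrite dom_extend => ->.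
by rewrite (Hmd (prob_gt0 Hphi Hcp) Hphi Hcp).
Qed.

Lemma mono1 phi (S : {set E}) e : 0 < p phi -> f S phi <= f (e |: S) phi.
Proof.
move=> Hp; case: (boolP (e \in S)) => HeS; first by have -> : e |: S = S by apply/setP => y; rewrite !inE; case: eqP => // ->.
have Hc := consistent_restr phi S.
have := @gain phi (restr phi S) e Hp Hc; rewrite dom_restr => /(_ HeS) H.
have := Hmon (prob_gt0 Hp Hc); rewrite dom_restr => /(_ e HeS) H0.
by rewrite -subr_ge0; apply: le_trans H.
Qed.

Lemma mono phi (S T : {set E}) : 0 < p phi -> S \subset T -> f S phi <= f T phi.
Proof.
move=> Hp; move Hn: #|T :\: S| => n; elim: n T Hn => [|n IH] T Hn HST.
  have -> : T = S; last by [].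
  apply/eqP; rewrite eqEsubset HST andbT; apply/subsetP => x xT.
  case: (boolP (x \in S)) => // xS; move/eqP: Hn; rewrite cards_eq0 => /eqP H.
  by move: (in_set0 x); rewrite -H inE xS xT.
have : (0 < #|T :\: S|)%N by rewrite Hn.
move=> /card_gt0P [x]; rewrite inE => /andP [xS xT].
have -> : T = x |: (T :\ x) by rewrite setD1K.
apply: le_trans (mono1 _ _ Hp); apply: IH.
- have Eq : (T :\: S) :\ x = (T :\ x) :\: S.
    by apply/setP => y; rewrite !inE; case: (y == x); rewrite ?andbF ?andbT.
  have := cardsD1 x (T :\: S); rewrite inE xS xT Eq Hn /= add1n.
  by move=> [->].
- apply/subsetP => y yS; rewrite !inE (subsetP HST y yS) andbT.
  by apply/eqP => Eyx; move: xS; rewrite -Eyx yS.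
Qed.

End Main.

Section Greedy.
Variables (R : realType) (E O : finType).
Variables (p : {ffun {ffun E -> O} -> R}) (f : {set E} -> {ffun E -> O} -> R).
Hypothesis Hprior : is_prior p.
Hypothesis Hmon : worst_case_monotone p f.
Hypothesis Hsub : worst_case_submodular p f.
Hypothesis Hmd : minimal_dependency p f.
Variables (b : nat) (part : E -> 'I_b) (k : 'I_b -> nat).
Variable sel : {ffun E -> option O} -> 'I_b -> E.
Hypothesis Hsel : greedy_selector part (fun psi => 0 < prob p psi) (fwc p f) sel.
Implicit Types (psi : {ffun E -> option O}) (phi : {ffun E -> O}).

Lemma round phi z psi0 j : 0 < p phi -> consistent phi psi0 ->
  let psij := iter j (fun psi => extend psi (sel psi z) (phi (sel psi z))) psi0 in
  [/\ consistent phi psij, subrel psi0 psij &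
    forall psi', subrel psij psi' -> 0 < prob p psi' ->
    forall e, e \in block part z -> e \notin dom psi' ->
      j%:R * fwc p f e psi' <= f (dom psij) phi - f (dom psi0) phi].
Proof.
move=> Hp Hc0; elim: j => [|j [Hc Hs Hb]] /=.
  split=> //; first exact: subrel_refl.
  by move=> *; rewrite mul0r subrr.
set psij := iter j _ psi0 in Hc Hs Hb *.
set g := sel psij z.
split; first exact: consistent_extend.
  exact: subrel_trans Hs (subrel_extend_cons _ Hc).
move=> psi' Hs' Hpr e eB end'.
have Hj' : subrel psij psi' := subrel_trans (subrel_extend_cons _ Hc) Hs'.
have endj : e \notin dom psij.
  by apply: contra end' => /(subsetP (subrel_dom Hj')).
have Hpj := prob_gt0 Hprior Hp Hc.
have [gB gnd Hmax] := Hsel Hpj (introT existsP (ex_intro _ e (introT andP (conj eB endj)))).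
have H1 := Hmax e eB endj.
have H2 := Hsub Hpj Hpr Hj' end'.
have H3 := gain Hprior Hmd Hp Hc gnd.
have H4 := Hb psi' Hj' Hpr e eB end'.
rewrite dom_extend -natr1 mulrDl mul1r.
move: H1 H2 H3 H4; rewrite -/g.
set a := fwc p f e psi'; set t := j%:R * a.
lra.
Qed.


Variables (cnt : 'I_b -> nat) (gam : R).
Hypothesis Hgam0 : 0 <= gam.
Hypothesis Hcnt : forall z, (0 < cnt z)%N.
Hypothesis Hgk : forall z, gam * (k z)%:R <= (cnt z)%:R.

Lemma rounds phi l psi0 : 0 < p phi -> consistent phi psi0 ->
  let psi := foldl (fun psi z =>
      iter (cnt z) (fun psi => extend psi (sel psi z) (phi (sel psi z))) psi) psi0 l in
  [/\ consistent phi psi, subrel psi0 psi &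
    forall psi', subrel psi psi' -> 0 < prob p psi' ->
    forall X : {set E}, (forall e, e \in X -> part e \in l) ->
      (forall e, e \in X -> e \notin dom psi') ->
      (forall z, #|X :&: block part z| <= k z)%N ->
      gam * \sum_(e in X) fwc p f e psi' <= f (dom psi) phi - f (dom psi0) phi].
Proof.
move=> Hp; elim: l psi0 => [|z l IH] psi0 Hc0 /=.
  split=> //; first exact: subrel_refl.
  move=> psi' _ _ X HX _ _; rewrite big1 ?mulr0 ?subrr // => e /HX.
  by rewrite in_nil.
set psi1 := iter (cnt z) _ psi0.
have [Hc1 Hs01 Hb1] := round z (cnt z) Hp Hc0.
have [Hc Hs1 Hb] := IH psi1 Hc1.
split=> //; first exact: subrel_trans Hs01 Hs1.
move=> psi' Hs' Hpr X HX Hnd Hcard.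
set psi := foldl _ psi1 l in Hc Hs1 Hb Hs' *.
rewrite (bigID (fun e => part e == z)) /= mulrDr.
set X' := [set e in X | part e != z].
have H2 : gam * \sum_(e in X') fwc p f e psi' <= f (dom psi) phi - f (dom psi1) phi.
  apply: Hb => //.
  - move=> e; rewrite inE => /andP [eX ez]; move: (HX e eX).
    by rewrite in_cons (negbTE ez).
  - by move=> e; rewrite inE => /andP [eX _]; apply: Hnd.
  - move=> w; apply: leq_trans (Hcard w); apply: subset_leq_card.
    by apply/subsetP => e; rewrite !inE => /andP [/andP [-> _] ->].
have E2 : \sum_(e in X | part e != z) fwc p f e psi' = \sum_(e in X') fwc p f e psi'.
  by apply: eq_bigl => e; rewrite inE.
rewrite E2.
set D := f (dom psi1) phi - f (dom psi0) phi.
have HD : 0 <= D by rewrite subr_ge0; apply: (mono Hprior Hmon Hmd Hp); apply: subrel_dom.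
have Hc0' : (0 < (cnt z)%:R :> R) by rewrite ltr0n.
have H1 : forall e, (e \in X) && (part e == z) -> fwc p f e psi' <= D / (cnt z)%:R.
  move=> e /andP [eX /eqP ez]; rewrite ler_pdivlMr // mulrC.
  apply: Hb1; first exact: subrel_trans Hs1 Hs'.
  - by [].
  - by rewrite inE ez.
  - exact: Hnd.
have H3 : \sum_(e in X | part e == z) fwc p f e psi' <= (#|X :&: block part z|)%:R * (D / (cnt z)%:R).
  apply: le_trans (ler_sum _ H1) _.
  rewrite (eq_bigl (fun e => e \in X :&: block part z)); last first.
    by move=> e; rewrite !inE.
  by rewrite sumr_const mulr_natl.
have H4 := ler_wpM2l Hgam0 H3.
have H5 : gam * ((#|X :&: block part z|)%:R * (D / (cnt z)%:R)) <= D.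
  rewrite mulrA; apply: (@le_trans _ _ ((cnt z)%:R * (D / (cnt z)%:R))).
    apply: ler_wpM2r; first by apply: divr_ge0 => //; apply: ltW.
    apply: le_trans (Hgk z); apply: ler_wpM2l => //.
    by rewrite ler_nat; apply: Hcard.
  by rewrite mulrCA divff ?mulr1 // gt_eqF.
move: H2 H4 H5; rewrite /D; lra.
Qed.

End Greedy.

Section Adv.
Variables (R : realType) (E O : finType).
Variables (p : {ffun {ffun E -> O} -> R}) (f : {set E} -> {ffun E -> O} -> R).
Hypothesis Hprior : is_prior p.
Hypothesis Hmon : worst_case_monotone p f.
Hypothesis Hsub : worst_case_submodular p f.
Hypothesis Hmd : minimal_dependency p f.
Variable pi : {ffun E -> option O} -> option E.
Variable psiG : {ffun E -> option O}.
Implicit Types (psi : {ffun E -> option O}) (phi : {ffun E -> O}).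

Lemma consistent_subrel phi psi psi' :
  subrel psi psi' -> consistent phi psi' -> consistent phi psi.
Proof. by move=> /subrelP H /consistentP C; apply/consistentP => e o /H /C. Qed.

Lemma iter_fix (T : Type) (g : T -> T) x n : g x = x -> iter n g x = x.
Proof. by move=> H; elim: n => //= n ->. Qed.

Lemma dom_step phi psi : dom psi \subset dom (step pi phi psi).
Proof.
rewrite /step; case: (pi psi) => // e; case: (e \in dom psi) => //.
by rewrite dom_extend subsetUr.
Qed.

Lemma dom_iter phi psi n : dom psi \subset dom (iter n (step pi phi) psi).
Proof.
elim: n => //= n IH; apply: subset_trans IH (dom_step _ _).
Qed.

Lemma adv_fix n psiP psiC : (forall phi, step pi phi psiP = psiP) ->
  subrel psiP psiC -> subrel psiG psiC -> 0 < prob p psiC ->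
  exists phi', [/\ 0 < p phi', consistent phi' psiC &
    f (dom (iter n (step pi phi') psiP) :|: dom psiG) phi' - f (dom psiC) phi'
    <= \sum_(e in dom (iter n (step pi phi') psiP) :\: dom psiC) fwc p f e psiG].
Proof.
move=> Hfix HPC HGC HprC.
have [phi' [Hc Hp]] := prob_ex HprC.
exists phi'; split => //; rewrite iter_fix //.
have HprG : 0 < prob p psiG by apply: (prob_gt0 Hprior Hp); exact: consistent_subrel HGC Hc.
apply: (@le_trans _ _ 0).
  rewrite subr_le0; apply: (mono Hprior Hmon Hmd Hp).
  by rewrite subUset !subrel_dom.
apply: sumr_ge0 => e; rewrite inE => /andP [nC _]; apply: Hmon => //.
by apply: contra nC => /(subsetP (subrel_dom HGC)).
Qed.

Lemma adv_run n : forall psiP psiC,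
  subrel psiP psiC -> subrel psiG psiC -> 0 < prob p psiC ->
  exists phi', [/\ 0 < p phi', consistent phi' psiC &
    f (dom (iter n (step pi phi') psiP) :|: dom psiG) phi' - f (dom psiC) phi'
    <= \sum_(e in dom (iter n (step pi phi') psiP) :\: dom psiC) fwc p f e psiG].
Proof.
elim: n => [|n IH] psiP psiC HPC HGC HprC.
  have [phi' [Hc Hp]] := prob_ex HprC.
  exists phi'; split => //=.
  have HprG : 0 < prob p psiG by apply: (prob_gt0 Hprior Hp); exact: consistent_subrel HGC Hc.
  apply: (@le_trans _ _ 0).
    rewrite subr_le0; apply: (mono Hprior Hmon Hmd Hp).
    by rewrite subUset !subrel_dom.
  apply: sumr_ge0 => e; rewrite inE => /andP [nC _]; apply: Hmon => //.
  by apply: contra nC => /(subsetP (subrel_dom HGC)).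
case Hpi: (pi psiP) => [e|]; last first.
  by apply: adv_fix => // phi; rewrite /step Hpi.
case eP: (e \in dom psiP).
  by apply: adv_fix => // phi; rewrite /step Hpi eP.
case HeC: (psiC e) => [o|].
  set psiP1 := extend psiP e o.
  have HPC1 : subrel psiP1 psiC by rewrite -(extend_same HeC); apply: subrel_extend2.
  have [phi' [Hp' Hc' Hb]] := IH psiP1 psiC HPC1 HGC HprC.
  exists phi'; split => //.
  have Hst : step pi phi' psiP = psiP1.
    by rewrite /step Hpi eP (consistentP _ _ Hc' e o HeC).
  by rewrite iterSr Hst.
have eC : e \notin dom psiC by rewrite in_dom HeC.
have [o [Hpo Hfo]] := adv Hprior Hmd HprC eC.
set psiC1 := extend psiC e o; set psiP1 := extend psiP e o.
have HPC1 : subrel psiP1 psiC1 := subrel_extend2 e o HPC.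
have HGC1 : subrel psiG psiC1 := subrel_extend_none o HGC HeC.
have [phi' [Hp' Hc1' Hb]] := IH psiP1 psiC1 HPC1 HGC1 Hpo.
have [Hc' Hoe] := consistent_extend_inv HeC Hc1'.
exists phi'; split => //.
have Hst : step pi phi' psiP = psiP1 by rewrite /step Hpi eP Hoe.
rewrite iterSr Hst.
rewrite /psiC1 dom_extend in Hb.
set T := dom (iter n (step pi phi') psiP1) in Hb *.
have eT : e \in T.
  by apply: (subsetP (dom_iter _ _ _)); rewrite dom_extend setU11.
have HprG : 0 < prob p psiG by apply: (prob_gt0 Hprior Hp'); exact: consistent_subrel HGC Hc'.
have H1 := Hfo phi' Hp' Hc1'.
have H2 := Hsub HprG HprC HGC eC.
rewrite (bigD1 e) /=; last by rewrite in_setD eC eT.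
rewrite (eq_bigl (fun i => i \in T :\: (e |: dom psiC))); last first.
  move=> i; rewrite !in_setD in_setU1 negb_or.
  by case: (i == e); case: (i \in dom psiC); case: (i \in T).
move: H1 H2 Hb; lra.
Qed.

End Adv.

Unset Implicit Arguments. Set Strict Implicit.
Lemma consistent_empty {E O : finType} (phi : {ffun E -> O}) :
  consistent phi empty_obs.
Proof. by apply/consistentP => e o; rewrite ffunE. Qed.

Lemma subrel_empty {E O : finType} (psi : {ffun E -> option O}) :
  subrel empty_obs psi.
Proof. by apply/subrelP => e o; rewrite ffunE. Qed.

Theorem lemma1 (R : realType) (E O : finType) (b : nat)
    (part : E -> 'I_b) (k : 'I_b -> nat)
    (p : {ffun {ffun E -> O} -> R}) (f : {set E} -> {ffun E -> O} -> R)
    (selw sela : {ffun E -> option O} -> 'I_b -> E) :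
  (0 < b)%N ->
  (forall z, 2 <= k z <= #|block part z|)%N ->
  is_prior p ->
  (forall S phi, 0 <= f S phi) ->
  worst_case_monotone p f ->
  worst_case_submodular p f ->
  minimal_dependency p f ->
  (* pi^mw : floor(k_z/2) worst-case greedy iterations per meta-round *)
  greedy_selector part (fun psi => 0 < prob p psi) (fwc p f) selw ->
  (* pi^ma : ceil(k_z/2) average-case greedy iterations per meta-round *)
  greedy_selector part (fun psi => 0 < prob p psi) (favg p f) sela ->
  forall pi : {ffun E -> option O} -> option E,
    (forall phi, 0 < p phi -> indep part k (Esel pi phi)) ->
    fwc_pol p f pi <=
      (1 + (gamma k)^-1) *
      minU p (fun phi =>
        f (dom (greedy_run (fun z => (k z)./2) selw phi)
           :|: dom (greedy_run (fun z => uphalf (k z)) sela phi)) phi).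
Proof.
move=> Hb Hk Hprior Hf0 Hmon Hsub Hmd Hselw Hsela pi Hind.
set gam := gamma k.
have Hk2 : forall z, (2 <= k z)%N by move=> z; case/andP: (Hk z).
have Hkpos : forall z, (0 < (k z)%:R :> R) by move=> z; rewrite ltr0n; apply: leq_trans (Hk2 z).
have Hgz : forall z, gam <= ((k z)./2)%:R / (k z)%:R.
  by move=> z; rewrite /gam /gamma; apply: bigmin_le.
have Hgk : forall z, gam * (k z)%:R <= ((k z)./2)%:R.
  by move=> z; rewrite -ler_pdivlMr.
have Hcnt : forall z, (0 < (k z)./2)%N by move=> z; rewrite half_gt0; apply: Hk2.
have Hgam : 0 < gam.
  rewrite /gam /gamma; apply: (big_ind (fun x => 0 < x)) => //.
    by move=> x y Hx Hy; rewrite lt_min Hx Hy.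
  by move=> z _; apply: divr_gt0 => //; rewrite ltr0n.
set H := fun phi => dom (greedy_run (fun z => uphalf (k z)) sela phi).
have claim : forall phi, 0 < p phi ->
    fwc_pol p f pi <= (1 + gam^-1) *
      f (dom (greedy_run (fun z => (k z)./2) selw phi) :|: H phi) phi.
  move=> phi Hp.
  set psiG := greedy_run (fun z => (k z)./2) selw phi.
  have [Hcg Hs0 Hbnd] : [/\ consistent phi psiG, subrel empty_obs psiG &
    forall psi', subrel psiG psi' -> 0 < prob p psi' ->
    forall X : {set E}, (forall e, e \in X -> part e \in enum 'I_b) ->
      (forall e, e \in X -> e \notin dom psi') ->
      (forall z, #|X :&: block part z| <= k z)%N ->
      gam * \sum_(e in X) fwc p f e psi' <= f (dom psiG) phi - f (dom (@empty_obs E O)) phi]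
    := rounds Hprior Hmon Hsub Hmd Hselw (cnt := fun z => (k z)./2) (ltW Hgam) Hcnt Hgk
         (enum 'I_b) Hp (consistent_empty phi).
  have Hpg := prob_gt0 Hprior Hp Hcg.
  have [phi' [Hp' Hc' Hadv]] := adv_run Hprior Hmon Hsub Hmd pi #|E|
      (subrel_empty psiG) (subrel_refl psiG) Hpg.
  have {}Hadv : f (Esel pi phi' :|: dom psiG) phi' - f (dom psiG) phi'
     <= \sum_(e in Esel pi phi' :\: dom psiG) fwc p f e psiG := Hadv.
  have HX := Hbnd psiG (subrel_refl psiG) Hpg (Esel pi phi' :\: dom psiG).
  have {}HX : gam * \sum_(e in Esel pi phi' :\: dom psiG) fwc p f e psiG
      <= f (dom psiG) phi - f (dom (@empty_obs E O)) phi.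
    apply: HX.
    - by move=> e _; rewrite mem_enum.
    - by move=> e; rewrite in_setD => /andP [].
    - move=> z; apply: leq_trans (_ : #|Esel pi phi' :&: block part z| <= k z)%N.
        apply: subset_leq_card; apply/subsetP => x.
        by rewrite !in_setI in_setD => /andP [/andP [_ ->] ->].
      by move: (Hind phi' Hp') => /forallP.
  have Hf1 := Hmd psiG phi Hpg Hp Hcg.
  have Hf2 := Hmd psiG phi' Hpg Hp' Hc'.
  have Hfe := Hf0 (dom (@empty_obs E O)) phi.
  have H1 : fwc_pol p f pi <= f (Esel pi phi') phi'.
    by rewrite /fwc_pol /minU; apply: (setmin_le (fun phi => f (Esel pi phi) phi)).
  have H2 : f (Esel pi phi') phi' <= f (Esel pi phi' :|: dom psiG) phi'.
    by apply: (mono Hprior Hmon Hmd Hp'); apply: subsetUl.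
  have H3 : f (dom psiG) phi <= f (dom psiG :|: H phi) phi.
    by apply: (mono Hprior Hmon Hmd Hp); apply: subsetUl.
  set S := \sum_(e in Esel pi phi' :\: dom psiG) fwc p f e psiG in Hadv HX.
  have HS : S <= gam^-1 * f (dom psiG) phi.
    rewrite -(mulKf (lt0r_neq0 Hgam) S); apply: ler_wpM2l.
      by rewrite invr_ge0 ltW.
    by move: HX Hfe; lra.
  have H4 : (1 + gam^-1) * f (dom psiG) phi <= (1 + gam^-1) * f (dom psiG :|: H phi) phi.
    by apply: ler_wpM2l => //; rewrite addr_ge0 // invr_ge0 ltW.
  move: H4; rewrite mulrDl mul1r.
  set t := gam^-1 * f (dom psiG) phi in HS *.
  move: H1 H2 H3 Hadv HS Hf1 Hf2; lra.
have [phi0 [_ Hp0]] : exists phi, consistent phi (@empty_obs E O) /\ 0 < p phi.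
  apply: prob_ex; rewrite /prob (eq_bigl xpredT); last by move=> phi; rewrite consistent_empty.
  by case: Hprior => _ ->.
rewrite /minU.
have Hex : exists x, x \in (fun phi => 0 < p phi : bool) by exists phi0.
have [phi Hphi ->] := setmin_ex (fun phi => f (dom (greedy_run (fun z => (k z)./2) selw phi)
           :|: dom (greedy_run (fun z => uphalf (k z)) sela phi)) phi) Hex.
exact: claim.
Qed.
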